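(* Let $d\ge2$, let $\Omega\subset\mathbb R^d$ be a nonempty bounded open convex polytope, and let $E\subset\mathbb R^d$ carry a Borel probability measure $\mu$ such that $(E,\mu)$ is weakly incoming to $\Omega$. Let $x_0\in\overline\Omega$. Then there exist $r_0>0$, $\epsilon>0$, a measurable $F\subset E$ with $\mu(F)>0$ and $\theta\in\{\pm1\}$ such that for all $f\in F$, all $x\in B(x_0,r_0)\cap\Omega$ and all $t\in[0,\epsilon]$, $x+t\theta f\in\Omega$.
   Context: $\Omega=\{x\in\mathbb R^d:\ \ell_j(x)>b_j,\ j=1,\dots,m\}$ for linear forms $\ell_j$ and reals $b_j$. Define $\mathrm c(x)=0$ for $x\in\Omega$, $+\infty$ for $x\notin\overline\Omega$, $\#\{i:\ell_i(x)=b_i\}$ for $x\in\partial\Omega$. $(E,\mu)$ is weakly incoming to $\Omega$ if for every $x_0\in\partial\Omega$ there exist $\epsilon>0$, $\theta\in\{\pm1\}$ and a measurable $F\subset E$ with $\mu(F)>0$ such that $\mathrm c(x_0+\theta te)<\mathrm c(x_0)$ for all $t\in]0,\epsilon]$, $e\in F$. $B(x_0,r)$ is the open ball. *)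

(* Defs.v *)
From HB Require Import structures.
From mathcomp Require Import all_boot all_order all_algebra.
From mathcomp Require Import all_classical all_reals all_analysis.
Set Implicit Arguments. Unset Strict Implicit. Unset Printing Implicit Defensive.
Import Order.TTheory GRing.Theory Num.Theory.
Import numFieldNormedType.Exports.
Local Open Scope classical_set_scope.
Local Open Scope ring_scope.

Definition lform {R : realType} {d : nat} (a x : 'rV[R]_d) : R :=
  \sum_(i < d) a ord0 i * x ord0 i.

Definition polyOmega {R : realType} {d m : nat}
    (a : 'I_m -> 'rV[R]_d) (b : 'I_m -> R) : set 'rV[R]_d :=
  [set x | forall j : 'I_m, b j < lform (a j) x].

Definition cfun {R : realType} {d m : nat}
    (a : 'I_m -> 'rV[R]_d) (b : 'I_m -> R) (x : 'rV[R]_d) : \bar R :=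
  if `[< polyOmega a b x >] then 0%E
  else if `[< closure (polyOmega a b) x >] then
    (#|[pred i : 'I_m | lform (a i) x == b i]|%:R)%:E
  else +oo%E.

Definition borelRd (R : realType) (d : nat) :=
  g_sigma_algebraType (@open 'rV[R]_d).

Definition eball {R : realType} {d : nat} (x0 : 'rV[R]_d) (r : R) : set 'rV[R]_d :=
  [set y | \sum_(i < d) (y ord0 i - x0 ord0 i) ^+ 2 < r ^+ 2].

Definition weakly_incoming {R : realType} {d m : nat}
    (E : set 'rV[R]_d) (mu : probability (borelRd R d) R)
    (a : 'I_m -> 'rV[R]_d) (b : 'I_m -> R) : Prop :=
  forall x0 : 'rV[R]_d,
    (closure (polyOmega a b) `\` polyOmega a b) x0 ->
    exists (eps : R) (theta : R) (F : set (borelRd R d)),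
      [/\ 0 < eps, (theta = 1 \/ theta = -1),
          [/\ measurable F, F `<=` E & (0 < mu F)%E] &
          forall t (e : 'rV[R]_d), 0 < t <= eps -> F e ->
            (cfun a b (x0 + (theta * t) *: e) < cfun a b x0)%E].

(* Main.v *)
Require Import Defs.
From HB Require Import structures.
From mathcomp Require Import all_boot all_order all_algebra.
From mathcomp Require Import all_classical all_reals all_analysis.
From mathcomp Require Import lra.
Import Order.TTheory GRing.Theory Num.Theory.
Import numFieldNormedType.Exports.
Local Open Scope classical_set_scope.
Local Open Scope ring_scope.

Section H.
Variables (R : realType) (d : nat).

Lemma lform_cont (c : 'rV[R]_d) : continuous (lform c).
Proof.
rewrite /lform.
suff H : forall s : seq 'I_d, continuous (fun x : 'rV[R]_d => \sum_(i <- s) c ord0 i * x ord0 i).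
  exact: H.
elim=> [|i s IH].
  by move=> x; under eq_fun do rewrite big_nil; exact: cst_continuous.
move=> x; under eq_fun do rewrite big_cons.
apply: (@continuousD _ _ _ (fun x : 'rV[R]_d => c ord0 i * x ord0 i)
     (fun x => \sum_(j <- s) c ord0 j * x ord0 j)); last exact: IH.
apply: (@continuousM _ _ (fun _ => c ord0 i) (fun x : 'rV[R]_d => x ord0 i)).
  exact: cst_continuous.
exact: coord_continuous.
Qed.

Lemma lformD (c x y : 'rV[R]_d) (k : R) :
  lform c (x + k *: y) = lform c x + k * lform c y.
Proof.
rewrite /lform mulr_sumr -big_split /=; apply: eq_bigr => i _.
by rewrite !mxE mulrDr mulrCA.
Qed.

Lemma closure_lform (c : 'rV[R]_d) (b : R) (A : set 'rV[R]_d) x :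
  (forall y, A y -> b < lform c y) -> closure A x -> b <= lform c x.
Proof.
move=> HA cx.
have := @preimage_closed _ _ (lform c) [set y | b <= y].
apply.
- by move=> y _; exact: lform_cont.
- exact: closed_ge.
- apply: (closureS _ cx) => y /HA /ltW. done.
Qed.

Lemma eball_coord (x0 x : 'rV[R]_d) r i : eball x0 r x -> 0 < r ->
  `|x0 ord0 i - x ord0 i| < r.
Proof.
rewrite /eball /= => H r0.
have : (x ord0 i - x0 ord0 i) ^+ 2 < r ^+ 2.
  apply: le_lt_trans H.
  rewrite (bigD1 i) //= lerDl; apply: sumr_ge0 => j _; exact: sqr_ge0.
rewrite -real_normK ?num_real // ltr_pXn2r // ?inE ?normr_ge0 ?ltW //.
  by rewrite distrC.
by rewrite nnegrE ltW.
Qed.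

Lemma near_r0 (m : nat) (a : 'I_m -> 'rV[R]_d) (x0 : 'rV[R]_d) (g : 'I_m -> R) :
  exists r0, 0 < r0 /\ forall x, eball x0 r0 x -> forall j, 0 < g j ->
    lform (a j) x0 - g j / 2 < lform (a j) x.
Proof.
have N : \forall x \near x0, forall j, 0 < g j -> lform (a j) x0 - g j / 2 < lform (a j) x.
  apply: (@filter_forall 'rV[R]_d 'I_m (fun j x => 0 < g j -> lform (a j) x0 - g j / 2 < lform (a j) x) (nbhs x0) _) => j.
  case: (ltP 0 (g j)) => gj.
    apply: filterS (cvgr_gt _ (lform_cont (a j) x0) (lform (a j) x0 - g j / 2) _).
      by move=> x Hx _.
    by rewrite ltrBlDr ltrDl divr_gt0.
  by apply: nearW => x.
move/nbhs_ballP: N => [e e0 He].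
exists e; split => // x Hx; apply: He.
split => // i j; rewrite (ord1 i).
have := @eball_coord x0 x e j Hx e0.
done.
Qed.
Lemma core (m : nat) (a : 'I_m -> 'rV[R]_d) (b : 'I_m -> R) (x0 f : 'rV[R]_d)
  (eps theta r0 : R) : 0 < eps ->
  (forall j, - (lform (a j) x0 - b j) <= eps * (theta * lform (a j) f)) ->
  (forall x, eball x0 r0 x -> forall j, 0 < lform (a j) x0 - b j ->
    lform (a j) x0 - (lform (a j) x0 - b j) / 2 < lform (a j) x) ->
  forall x t, eball x0 r0 x -> polyOmega a b x -> 0 <= t <= eps / 2 ->
    polyOmega a b (x + (t * theta) *: f).
Proof.
move=> eps0 Hf Hr x t Hx Ox /andP[t0 te] j.
rewrite /polyOmega /= lformD -mulrA.
set v := theta * lform (a j) f.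
have Oj := Ox j.
have Hfj := Hf j; rewrite -/v in Hfj.
case: (leP 0 v) => v0.
  have : 0 <= t * v by rewrite mulr_ge0.
  lra.
have h : eps / 2 * v <= t * v by rewrite ler_wnM2r // ltW.
have h' : eps / 2 * v = (eps * v) / 2 by rewrite mulrAC.
case: (ltP 0 (lform (a j) x0 - b j)) => g0.
  have := Hr x Hx j g0.
  lra.
lra.
Qed.
Lemma closed_meas (C : set 'rV[R]_d) : closed C -> measurable (C : set (borelRd R d)).
Proof.
move=> cC.
have : measurable (~` C : set (borelRd R d)).
  apply: sub_sigma_algebra; exact: closed_openC.
by move/measurableC; rewrite setCK.
Qed.

Lemma halfsp_closed (m : nat) (a : 'I_m -> 'rV[R]_d) (c : 'I_m -> R) :
  closed [set f : 'rV[R]_d | forall j, c j <= lform (a j) f].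
Proof.
have -> : [set f : 'rV[R]_d | forall j, c j <= lform (a j) f] =
  \bigcap_(j in setT) (lform (a j) @^-1` [set y | c j <= y]).
  apply/seteqP; split => f /= H j; first by move=> _; exact: H.
  exact: H.
apply: closed_bigI => j _.
apply: preimage_closed; last exact: closed_ge.
by move=> y _; exact: lform_cont.
Qed.
End H.

Theorem corollary5p5 (R : realType) (d m : nat) (hd : (2 <= d)%N)
    (a : 'I_m -> 'rV[R]_d) (b : 'I_m -> R)
    (hne : polyOmega a b !=set0)
    (hbdd : exists M : R, forall x, polyOmega a b x -> `|x| <= M)
    (E : set 'rV[R]_d) (mu : probability (borelRd R d) R)
    (hE : measurable (E : set (borelRd R d))) (hmuE : mu E = 1%E)
    (hinc : weakly_incoming E mu a b)
    (x0 : 'rV[R]_d) (hx0 : closure (polyOmega a b) x0) :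
  exists (r0 eps theta : R) (F : set (borelRd R d)),
    [/\ 0 < r0, 0 < eps, [/\ measurable F, F `<=` E & (0 < mu F)%E],
        (theta = 1 \/ theta = -1) &
        forall (f x : 'rV[R]_d) (t : R),
          F f -> eball x0 r0 x -> polyOmega a b x -> 0 <= t <= eps ->
          polyOmega a b (x + (t * theta) *: f)].
Proof.
have [r0 [r00 Hr]] := near_r0 _ _ _ a x0 (fun j => lform (a j) x0 - b j).
have [Ox0 | nOx0] := pselect (polyOmega a b x0).
-
  pose Fn (n : nat) : set (borelRd R d) :=
    E `&` [set f | forall j, - (n.+1%:R * (lform (a j) x0 - b j)) <= lform (a j) f].
  have mFn n : measurable (Fn n).
    apply: measurableI => //; apply: closed_meas.
    exact: (halfsp_closed _ _ _ a (fun j => - (n.+1%:R * (lform (a j) x0 - b j)))).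
  have [n Hn] : exists n, (0 < mu (Fn n))%E.
    apply/not_existsP => Hall.
    have H0 n : mu (Fn n) = 0%E.
      apply/eqP; rewrite eq_le measure_ge0 andbT; rewrite leNgt; apply/negP; exact: Hall.
    have EU : E `<=` \bigcup_n Fn n.
      move=> f Ef.
      pose S := \sum_(j < m) `|lform (a j) f| / (lform (a j) x0 - b j).
      exists (Num.truncn S) => //; split => // j.
      have gj : 0 < lform (a j) x0 - b j by rewrite subr_gt0; exact: Ox0.
      have h1 : `|lform (a j) f| / (lform (a j) x0 - b j) <= S.
        rewrite /S (bigD1 j) //= lerDl; apply: sumr_ge0 => i _.
        by rewrite divr_ge0 // subr_ge0 ltW //; exact: Ox0.
      have h2 := truncnS_gt S.
      have h3 : `|lform (a j) f| / (lform (a j) x0 - b j) < (Num.truncn S).+1%:R.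
        exact: le_lt_trans h2.
      rewrite ltr_pdivrMr // in h3.
      have h4 := ler_normr (lform (a j) f).
      rewrite mulrC in h3.
      have : - lform (a j) f <= `|lform (a j) f| by rewrite -normrN ler_norm.
      lra.
    have := measure_sigma_subadditive mu mFn hE EU.
    move=> h; suff : (mu E <= 0)%E by rewrite hmuE lee_fin ler10.
    apply: (le_trans h); rewrite eseries0 //.
    by move=> i _ _; exact: H0.
  exists r0, (n.+1%:R^-1 / 2), 1, (Fn n); split => //.
  + split => //; by move=> f [].
  + by left.
  move=> f x t [Ef Hf] Hx Ox Ht.
  apply: (@core R d m a b x0 f (n.+1%:R^-1) 1 r0) => //.
  * move=> j; rewrite mul1r ler_pdivlMl //; have := Hf j; lra.
-
  have [eps [theta [F [e0 htheta [mF FE muF] H]]]] := hinc x0 (conj hx0 nOx0).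
  exists r0, (eps / 2), theta, F; split => //.
  + by rewrite divr_gt0.
  move=> f x t Ff Hx Ox Ht.
  apply: (@core R d m a b x0 f eps theta r0) => //.
  move=> j.
  have Hy := H eps f _ Ff.
  rewrite e0 lexx /= in Hy.
  have cy : closure (polyOmega a b) (x0 + (theta * eps) *: f).
    move: (Hy isT); rewrite /cfun.
    rewrite (asboolF nOx0) (asboolT hx0).
    case: (asboolP (polyOmega a b _)) => [Oy _|_].
      exact: subset_closure.
    by case: (asboolP (closure _ _)).
  have := closure_lform _ _ _ _ _ _ (fun y (Oy : polyOmega a b y) => Oy j) cy.
  rewrite lformD.
  have -> : theta * eps * lform (a j) f = eps * (theta * lform (a j) f) by rewrite mulrCA mulrA.
  lra.
Qed.
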